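(* Let $\rho$ be a function quasi-norm over a $\sigma$-finite measure space $(\Omega,\Sigma,\mu)$ and let $f\in L_0^+(\mu)$ with $\rho(f)<\infty$. Then $f$ is dominating if and only if $\lim_n\rho(f\chi_{A_n})=0$ for every non-increasing sequence $(A_n)$ in $\Sigma$ with $\bigcap_nA_n=\emptyset$.
   Context: $L_0^+(\mu)$: measurable functions $\Omega\to[0,\infty]$ modulo a.e. equality. A function quasi-norm is $\rho\colon L_0^+(\mu)\to[0,\infty]$ with (F1) $\rho(tf)=t\rho(f)$, $t\ge0$; (F2) $f\le g$ a.e. $\Rightarrow\rho(f)\le\rho(g)$; (F3) $\rho(\chi_E)<\infty$ if $\mu(E)<\infty$; (F4) for all $E$ with $\mu(E)<\infty$ and $\varepsilon>0$ there is $\delta>0$ with $\mu(A)\le\varepsilon$ whenever $A\subseteq E$ measurable and $\rho(\chi_A)\le\delta$; (F5) $\rho(f+g)\le\kappa(\rho(f)+\rho(g))$. $f$ (with $\rho(f)<\infty$) is dominating if $\lim_n\rho(f_n)=0$ for every non-increasing sequence $(f_n)$ in $L_0^+(\mu)$ with $f_1\le f$ and $\lim_nf_n=0$. *)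

(* Defs.v *)
From HB Require Import structures.
From mathcomp Require Import all_boot all_order all_algebra.
From mathcomp Require Import all_classical all_reals all_analysis measurable_realfun.
Set Implicit Arguments. Unset Strict Implicit. Unset Printing Implicit Defensive.
Import Order.TTheory GRing.Theory Num.Theory.
Local Open Scope classical_set_scope.
Local Open Scope ring_scope.
Local Open Scope ereal_scope.

Section FQN.
Context {d : measure_display} {T : measurableType d} {R : realType}.
Variable mu : {measure set T -> \bar R}.

(* Representatives of elements of L_0^+(mu): measurable functions T -> [0,+oo]. *)
Definition L0p (f : T -> \bar R) : Prop :=
  measurable_fun setT f /\ forall x, 0 <= f x.

Definition chi (A : set T) : T -> \bar R := fun x => (\1_A x)%:E.

(* rho is given on representatives; it must respect a.e. equality so that it
   is a function on L_0^+(mu). *)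
Record function_quasinorm (rho : (T -> \bar R) -> \bar R) : Prop := {
  fqn_ae : forall f g, L0p f -> L0p g -> {ae mu, forall x, f x = g x} -> rho f = rho g ;
  fqn_ge0 : forall f, L0p f -> 0 <= rho f ;
  fqn_F1 : forall (t : R) f, L0p f -> (0 <= t)%R ->
             rho (fun x => t%:E * f x) = t%:E * rho f ;
  fqn_F2 : forall f g, L0p f -> L0p g -> {ae mu, forall x, f x <= g x} -> rho f <= rho g ;
  fqn_F3 : forall E, measurable E -> mu E < +oo -> rho (chi E) < +oo ;
  fqn_F4 : forall E, measurable E -> mu E < +oo -> forall eps : R, (0 < eps)%R ->
             exists2 delta : R, (0 < delta)%R &
               forall A, measurable A -> A `<=` E -> rho (chi A) <= delta%:E ->
                 mu A <= eps%:E ;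
  fqn_F5 : exists kappa : R, forall f g, L0p f -> L0p g ->
             rho (f \+ g) <= kappa%:E * (rho f + rho g) }.

Definition dominating (rho : (T -> \bar R) -> \bar R) (f : T -> \bar R) : Prop :=
  rho f < +oo /\
  forall fn : nat -> T -> \bar R,
    (forall n, L0p (fn n)) ->
    (forall n, {ae mu, forall x, fn n.+1 x <= fn n x}) ->
    {ae mu, forall x, fn 0%N x <= f x} ->
    {ae mu, forall x, fn ^~ x @ \oo --> 0} ->
    (fun n => rho (fn n)) @ \oo --> 0.

End FQN.

(* Main.v *)
Require Import Defs.
From mathcomp Require Import all_boot all_order all_algebra.
From mathcomp Require Import all_classical all_reals all_analysis measurable_realfun.
From mathcomp Require Import ring.
Import Order.TTheory GRing.Theory Num.Theory.
Local Open Scope classical_set_scope.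
Local Open Scope ring_scope.
Local Open Scope ereal_scope.

Lemma ecvg0 (R : realType) (u : nat -> \bar R) : (forall n, 0 <= u n) ->
  (forall e : R, (0 < e)%R -> \forall n \near \oo, u n <= e%:E) -> u @ \oo --> 0.
Proof.
move=> u0 H; apply/fine_cvgP; split.
  have := H 1%R ltr01; apply: filterS => n un.
  by rewrite ge0_fin_numE // (le_lt_trans un) // ltry.
apply/cvgr0Pnorm_le => e e0; have := H e e0; apply: filterS => n un.
rewrite /=; move: (u0 n) un; case: (u n) => //= r.
by rewrite !lee_fin => ? ?; rewrite ger0_norm.
Qed.

Lemma ecvg0_le (R : realType) (u : nat -> \bar R) : u @ \oo --> 0 ->
  forall e : R, (0 < e)%R -> \forall n \near \oo, u n <= e%:E.
Proof.
move=> /fine_cvgP [fu /cvgr0Pnorm_le cu] e e0.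
have := cu e e0; apply: filterS2 fu => n fn /=.
rewrite -[u n]fineK // lee_fin; apply: le_trans; exact: ler_norm.
Qed.

Lemma chi_ge0 d (T : measurableType d) (R : realType) (A : set T) x :
  0 <= @chi d T R A x.
Proof. by rewrite /chi lee_fin indicE; case: (x \in A). Qed.

Lemma chi_le1 d (T : measurableType d) (R : realType) (A : set T) x :
  @chi d T R A x <= 1.
Proof. by rewrite /chi lee_fin indicE; case: (x \in A). Qed.

Lemma mchi d (T : measurableType d) (R : realType) (A : set T) :
  measurable A -> measurable_fun setT (@chi d T R A).
Proof. by move=> mA; apply: measurableT_comp => //; exact: measurable_indic. Qed.

Theorem proposition3p22 (d : measure_display) (T : measurableType d) (R : realType)
  (mu : {measure set T -> \bar R}) (rho : (T -> \bar R) -> \bar R)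
  (f : T -> \bar R) :
  sigma_finite setT mu ->
  function_quasinorm mu rho ->
  L0p f -> rho f < +oo ->
  (dominating mu rho f <->
   forall A : nat -> set T,
     (forall n, measurable (A n)) ->
     (forall n, A n.+1 `<=` A n) ->
     \bigcap_n A n = set0 ->
     (fun n => rho (fun x => f x * chi (A n) x)) @ \oo --> 0).
Proof.
move=> _ fq [mf f0] rf; split.
  move=> [_ Hd] A mA decA cap0; apply: Hd.
  - move=> n; split; first by apply: emeasurable_funM => //; exact: mchi.
    by move=> x; apply: mule_ge0 => //; exact: chi_ge0.
  - move=> n; apply: aeW => x; apply: lee_wpmul2l => //.
    rewrite /chi lee_fin !indicE; case: (boolP (x \in A n.+1)) => //.
    by rewrite in_setE => /decA; rewrite -in_setE => ->.
  - apply: aeW => x /=; rewrite -[leRHS]mule1; apply: lee_wpmul2l => //.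
    exact: chi_le1.
  - apply: aeW => x; apply: cvg_near_cst.
    have : ~ (\bigcap_n A n) x by rewrite cap0.
    move=> /existsNP [m /= nAm]; exists m => // n /= mn.
    suff nA : ~ A n x.
      rewrite /chi indicE.
      have -> : (x \in A n) = false by apply/negbTE/negP; rewrite in_setE.
      by rewrite mule0.
    move=> Anx; apply: nAm; elim: n mn Anx => [|n IH]; first by rewrite leqn0 => /eqP ->.
    rewrite leq_eqVlt => /orP [/eqP -> //|]; rewrite ltnS => mn /decA; exact: IH.
move=> H; split => // fn Lfn dec fn0 cvg.
have [kap Hk] := fqn_F5 fq.
pose K := Num.max kap 1%R.
have K1 : (1 <= K)%R by rewrite le_max lexx orbT.
have K0 : (0 < K)%R by apply: lt_le_trans K1.
pose P x := (forall k, fn k x <= f x) /\ (fn ^~ x @ \oo --> 0).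
have aeP : {ae mu, forall x, P x}.
  have Hd := @ae_foralln _ _ _ mu (fun n x => fn n.+1 x <= fn n x) dec.
  apply: filterS3 Hd fn0 cvg => x Hdx H0 Hc; split => // k.
  elim: k => // k IH; exact: le_trans (Hdx k) IH.
have [N [mN N0 PN]] := aeP.
have aeN : {ae mu, forall x, ~ N x}.
  exists N; split => //; move=> x /=; exact: contrapT.
have rhof0 := fqn_ge0 fq (conj mf f0).
have rfin : rho f \is a fin_num by rewrite ge0_fin_numE.
pose r := fine (rho f).
have r0 : (0 <= r)%R by rewrite /r fine_ge0.
have rE : rho f = r%:E by rewrite /r fineK.
apply: ecvg0 => [n|e e0]; first exact: (fqn_ge0 fq (Lfn n)).
pose c := (e / (2 * K))%R.
have c0 : (0 < c)%R by rewrite /c divr_gt0 // mulr_gt0.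
pose et := (c / (r + 1))%R.
have et0 : (0 < et)%R by rewrite /et divr_gt0 // ltr_wpDl.
pose A n := (\bigcup_(k in [set k | (n <= k)%N]) [set x | et%:E * f x < fn k x]) `\` N.
have mA n : measurable (A n).
  apply: measurableD => //; apply: bigcup_measurable => k _.
  rewrite -[X in measurable X]setTI; apply: measurable_lte.
    by [].
    exact: measurable_funeM.
  by case: (Lfn k).
have decA n : A n.+1 `<=` A n.
  by move=> x [[k /= nk Hk'] nN]; split => //; exists k => //=; apply: ltnW.
have cap0 : \bigcap_n A n = set0.
  apply/seteqP; split => // x Hx.
  have [[k0 _ _] nN] := Hx 0%N I.
  have [Pf Pc] : P x.
    by apply: contrapT => nP; apply: nN; apply: PN.
  move: (f0 x) (Pf 0%N) (Hx 0%N I); case E : (f x) => [s| |] //.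
    rewrite lee_fin le_eqVlt => /orP [/eqP s0|s0] _.
      move=> [[k _ /=]]; rewrite E -s0 mule0 => lt _.
      by move: (Pf k); rewrite E -s0 leNgt lt.
    have es0 : (0 < et * s)%R by rewrite mulr_gt0.
    have [m _ Hm] := ecvg0_le _ _ Pc _ es0.
    have [[k /= mk lt] _] := Hx m I.
    move=> _; move: (Hm k mk) => /=; rewrite leNgt => /negP; apply.
    by rewrite EFinM -E.
  move=> _ _ [[k _ /=]]; rewrite E gt0_muley ?lte_fin //.
  by rewrite ltNge leey.
have Hg := ecvg0_le _ _ (H A mA decA cap0) _ c0.
apply: filterS Hg => n Hn.
pose g := fun x => f x * chi (A n) x.
have Lg : L0p g.
  split; first by apply: emeasurable_funM => //; exact: mchi.
  by move=> x; apply: mule_ge0 => //; exact: chi_ge0.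
have Le : L0p (fun x => et%:E * f x).
  split; first exact: measurable_funeM.
  by move=> x; apply: mule_ge0 => //; rewrite lee_fin ltW.
have rg0 := fqn_ge0 fq Lg.
have rgf : rho g <= rho f.
  apply: (fqn_F2 fq Lg (conj mf f0)); apply: aeW => x; rewrite /g -[leRHS]mule1.
  by apply: lee_wpmul2l => //; exact: chi_le1.
have gfin : rho g \is a fin_num by rewrite ge0_fin_numE // (le_lt_trans rgf).
pose s := fine (rho g).
have s0 : (0 <= s)%R by rewrite /s fine_ge0.
have sE : rho g = s%:E by rewrite /s fineK.
have Lsum : L0p ((fun x => et%:E * f x) \+ g).
  split; first by apply: emeasurable_funD; [case: Le|case: Lg].
  by move=> x; apply: adde_ge0; [case: Le|case: Lg].
have step1 : rho (fn n) <= rho ((fun x => et%:E * f x) \+ g).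
  apply: (fqn_F2 fq (Lfn n) Lsum); apply: filterS2 aeP aeN => x [Pf _] nN /=.
  rewrite /g /chi indicE; case: (boolP (x \in A n)) => xA.
    by rewrite mule1; apply: lee_paddl; [case: Le | exact: Pf].
  rewrite mule0 adde0 leNgt; apply/negP => lt; move/negP: xA; apply.
  by rewrite in_setE; split => //; exists n => /=.
apply: (le_trans step1); apply: (le_trans (Hk _ _ Le Lg)).
rewrite (fqn_F1 fq (conj mf f0) (ltW et0)) rE sE -(EFinM et r) -EFinD -EFinM lee_fin.
move: Hn; rewrite sE lee_fin => sc.
have er : (et * r <= c)%R.
  rewrite /et -mulrA ler_piMr ?(ltW c0) // mulrC ler_pdivrMr ?mul1r ?lerDl //.
  by rewrite ltr_wpDl.
apply: (le_trans (y := K * (et * r + s))%R).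
  by apply: ler_wpM2r; [apply: addr_ge0 => //; apply: mulr_ge0 => //; apply: ltW | rewrite le_max lexx].
apply: (le_trans (y := K * (c + c))%R).
  by apply: ler_wpM2l; [apply: ltW | apply: lerD].
have KK : K != 0%R by rewrite gt_eqF.
rewrite le_eqVlt; apply/orP; left; apply/eqP; rewrite /c; field.
by rewrite KK.
Qed.
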